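(* Let $E\subset\mathbb R^{n-1}$ be open and $B\colon E\to\mathbb R^{n-1}$ smooth, and suppose the oriented lines $\ell_y=\{(t,\,y+tB(y)):t\in\mathbb R\}\subset\mathbb R\times\mathbb R^{n-1}=\mathbb R^n$, $y\in E$, form a smooth nondegenerate line fibration of an open subset of $\mathbb R^n$. Then for every $y\in E$, the linear map $dB_y\colon\mathbb R^{n-1}\to\mathbb R^{n-1}$ has no real eigenvalues.
   Context: A smooth line fibration of an open set $T\subset\mathbb R^n$ is a family of pairwise disjoint oriented lines with union $T$ given by a smooth unit vector field $V$ on $T$ whose integral curves are these lines; it is nondegenerate if at every point $\nabla V$ vanishes only in the direction of $V$ (i.e. $\nabla_XV=0$ implies $X\in\mathrm{span}(V)$). Here $\mathrm{Hom}(\mathbb R,\mathbb R^{n-1})$ is identified with $\mathbb R^{n-1}$. *)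

(* Defs.v *)
From HB Require Import structures.
From mathcomp Require Import all_boot all_order all_algebra.
From mathcomp Require Import all_classical all_reals all_analysis.
Set Implicit Arguments. Unset Strict Implicit. Unset Printing Implicit Defensive.
Import Order.TTheory GRing.Theory Num.Theory.
Import numFieldNormedType.Exports.
Local Open Scope classical_set_scope.
Local Open Scope ring_scope.

(* C^k on a set A (A is open in all uses): f continuous on A and, for k > 0,
   every directional derivative exists on A and is C^(k-1) on A.
   In finite dimensions this is the usual C^k. *)
Fixpoint Ck {R : realType} {U W : normedModType R} (A : set U) (k : nat)
    (f : U -> W) : Prop :=
  match k with
  | 0 => forall x, A x -> {for x, continuous f}
  | k'.+1 => (forall x, A x -> {for x, continuous f}) /\
      forall v : U, (forall x, A x -> derivable f x v) /\
                    Ck A k' (fun x => 'D_v f x)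
  end.

Definition smooth_on {R : realType} {U W : normedModType R} (A : set U)
  (f : U -> W) : Prop := forall k, Ck A k f.

Definition eucl2 {R : realType} {n : nat} (v : 'rV[R]_n) : R :=
  \sum_(i < n) (v ord0 i) ^+ 2.

Definition line_pt {R : realType} {m : nat} (B : 'rV[R]_m -> 'rV[R]_m)
  (y : 'rV[R]_m) (t : R) : 'rV[R]_(1 + m) :=
  row_mx (t%:M : 'rV[R]_1) (y + t *: B y).

Definition line_dir {R : realType} {m : nat} (B : 'rV[R]_m -> 'rV[R]_m)
  (y : 'rV[R]_m) : 'rV[R]_(1 + m) :=
  (Num.sqrt (1 + eucl2 (B y)))^-1 *: row_mx (1%:M : 'rV[R]_1) (B y).

Definition line_union {R : realType} {m : nat} (E : set 'rV[R]_m)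
  (B : 'rV[R]_m -> 'rV[R]_m) : set 'rV[R]_(1 + m) :=
  [set p | exists y t, E y /\ p = line_pt B y t].

(* The lines l_y, y in E, form a smooth nondegenerate line fibration of the
   open set T = their union: they are pairwise disjoint, T is open, and there is
   a smooth unit vector field V on T whose integral curves are the (oriented)
   lines, i.e. V is the unit tangent of l_y at each point of l_y; and
   nabla_X V = 0 implies X in span(V). *)
Definition smooth_nondeg_line_fibration {R : realType} {m : nat}
  (E : set 'rV[R]_m) (B : 'rV[R]_m -> 'rV[R]_m) : Prop :=
  let T := line_union E B in
  open T /\
  (forall y1 y2 t1 t2, E y1 -> E y2 -> y1 <> y2 ->
     line_pt B y1 t1 <> line_pt B y2 t2) /\
  exists V : 'rV[R]_(1 + m) -> 'rV[R]_(1 + m),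
    smooth_on T V /\
    (forall p, T p -> eucl2 (V p) = 1) /\
    (forall y t, E y -> V (line_pt B y t) = line_dir B y) /\
    (forall p X, T p -> 'D_X V p = 0 -> exists c : R, X = c *: V p).

(* Main.v *)
Require Import Defs.
From HB Require Import structures.
From mathcomp Require Import all_boot all_order all_algebra.
From mathcomp Require Import all_classical all_reals all_analysis.
From mathcomp Require Import ring lra.
Import Order.TTheory GRing.Theory Num.Theory.
Import numFieldNormedType.Exports.
Local Open Scope classical_set_scope.
Local Open Scope ring_scope.

Section S1.
Context {R : realType}.

Lemma mxnorm_le {m n} (A : 'M[R]_(m,n)) (c : R) : 0 <= c ->
  (forall i j, `|A i j| <= c) -> `|A| <= c.
Proof.
move=> c0 H; rewrite [leLHS]/Num.Def.normr/= mx_normrE.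
by apply: bigmax_le => // -[i j] _; apply: H.
Qed.

Lemma mxnorm_ge {m n} (A : 'M[R]_(m,n)) i j : `|A i j| <= `|A|.
Proof.
rewrite [leRHS]/Num.Def.normr/= mx_normrE.
exact: (le_bigmax _ _ (i, j)).
Qed.

Lemma dir_line {U W : normedModType R} (f : U -> W) a u s :
  (fun h : R => h^-1 *: (((fun r : R => f (a + r *: u)) \o shift s) (h *: 1) - f (a + s *: u)))
  = (fun h : R => h^-1 *: ((f \o shift (a + s *: u)) (h *: u) - f (a + s *: u))).
Proof.
apply/funext => h /=; congr (_ *: (f _ - _)).
by rewrite scaler1 scalerDl addrCA addrC.
Qed.

Lemma dir_line_derivable {U W : normedModType R} (f : U -> W) a u s :
  derivable f (a + s *: u) u -> derivable (fun r : R => f (a + r *: u)) s 1.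
Proof. by rewrite /derivable dir_line. Qed.

Lemma dir_line_derive {U W : normedModType R} (f : U -> W) a u s :
  'D_1 (fun r : R => f (a + r *: u)) s = 'D_u f (a + s *: u).
Proof. by rewrite /derive dir_line. Qed.

Lemma entry_derivable {k} (g : R -> 'rV[R]_k) s j :
  derivable g s 1 -> derivable (fun r => g r 0 j) s 1 /\
   'D_1 (fun r => g r 0 j) s = ('D_1 g s) 0 j.
Proof.
move=> dg; split; first by move: dg => /derivable_mxP; apply.
by rewrite derive_mx // mxE.
Qed.
End S1.

Section S2.
Context {R : realType}.

Lemma mvt_bound (phi : R -> R) (b c eta : R) :
  (forall s, `|s| <= `|b| -> derivable phi s 1 /\ `|'D_1 phi s - c| <= eta) ->
  `|phi b - phi 0 - b * c| <= eta * `|b|.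
Proof.
move=> H.
have cont s : `|s| <= `|b| -> {for s, continuous phi}.
  by move=> /H [/derivable1_diffP /differentiable_continuous] .
case: (leP 0 b) => hb.
- have [xi xiI E] : exists2 xi, xi \in `[0, b]%R & phi b - phi 0 = 'D_1 phi xi * (b - 0).
    apply: (@MVT_segment R phi (fun s => 'D_1 phi s) 0 b) => //.
      move=> x xI; apply: derivableP; apply: (proj1 (H _ _)).
      move: xI; rewrite in_itv /= => /andP[x0 xb].
      by rewrite (ger0_norm hb) (gtr0_norm x0) ltW.
    apply: continuous_in_subspaceT => x xI; apply: cont.
    move: xI; rewrite inE /= in_itv /= => /andP[x0 xb].
    by rewrite (ger0_norm hb) (ger0_norm x0).
  have xb : `|xi| <= `|b|.
    move: xiI; rewrite in_itv /= => /andP[x0 xb].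
    by rewrite (ger0_norm hb) (ger0_norm x0).
  have -> : phi b - phi 0 - b * c = ('D_1 phi xi - c) * b by rewrite E; ring.
  rewrite normrM ler_wpM2r //.
  exact: (proj2 (H _ xb)).
- have [xi xiI E] : exists2 xi, xi \in `[b, 0]%R & phi 0 - phi b = 'D_1 phi xi * (0 - b).
    apply: (@MVT_segment R phi (fun s => 'D_1 phi s) b 0); first exact: ltW.
      move=> x xI; apply: derivableP; apply: (proj1 (H _ _)).
      move: xI; rewrite in_itv /= => /andP[x0 xb].
      by rewrite (ltr0_norm hb) (ltr0_norm xb) lerN2 ltW.
    apply: continuous_in_subspaceT => x xI; apply: cont.
    move: xI; rewrite inE /= in_itv /= => /andP[x0 xb].
    by rewrite (ltr0_norm hb) (ler0_norm xb) lerN2.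
  have xb : `|xi| <= `|b|.
    move: xiI; rewrite in_itv /= => /andP[x0 xb].
    by rewrite (ltr0_norm hb) (ler0_norm xb) lerN2.
  have -> : phi b - phi 0 - b * c = ('D_1 phi xi - c) * b.
    have -> : phi b - phi 0 = - (phi 0 - phi b) by ring.
    by rewrite E; ring.
  rewrite normrM ler_wpM2r //.
  exact: (proj2 (H _ xb)).
Qed.
End S2.

Section S3.
Context {R : realType}.

Lemma mulmx_bound {n k} (M : 'M[R]_(n,k)) (h : 'rV[R]_n) :
  `|h *m M| <= (\sum_i \sum_j `|M i j|) * `|h|.
Proof.
apply: mxnorm_le.
  by apply: mulr_ge0 => //; apply: sumr_ge0 => i _; apply: sumr_ge0.
move=> i0 j; rewrite mxE (le_trans (ler_norm_sum _ _ _)) // mulr_suml.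
apply: ler_sum => i _; rewrite normrM mulrC ler_pM //.
  rewrite (bigD1 j) //= lerDl; apply: sumr_ge0 => *; done.
by rewrite (ord1 i0); apply: mxnorm_ge.
Qed.

Lemma mulmx_cont n k (M : 'M[R]_(n,k)) : continuous (fun h : 'rV[R]_n => h *m M).
Proof.
move=> h0; apply/(@cvgrPdist_le _ _ _ (nbhs h0) _) => e e0.
set K := \sum_i \sum_j `|M i j|.
have K0 : 0 <= K by apply: sumr_ge0 => i _; apply: sumr_ge0.
apply/nbhs_ballP; exists (e / (K + 1)).
  by rewrite /= divr_gt0 // ltr_wpDl.
move=> h; rewrite -ball_normE /= => hb.
rewrite -mulmxBl (le_trans (mulmx_bound M _)) //.
have K1 : 0 < K + 1 by rewrite ltr_wpDl.
rewrite -/K; apply: (le_trans (ler_wpM2l K0 (ltW hb))).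
by rewrite mulrA ler_pdivrMr // mulrDr mulr1 mulrC lerDl ltW.
Qed.

Lemma partials_diff n k (A : set 'rV[R]_n) (f : 'rV[R]_n -> 'rV[R]_k) x :
  open A -> A x -> (forall v y, A y -> derivable f y v) ->
  (forall v, {for x, continuous (fun y => 'D_v f y)}) -> differentiable f x.
Proof.
move=> oA Ax der cont.
pose e (i : 'I_n) : 'rV[R]_n := delta_mx 0 i.
pose M := \matrix_(i < n, j < k) ('D_(e i) f x) 0 j.
have key : forall eps, 0 < eps -> \forall h \near (0 : 'rV[R]_n),
    `|f (h + x) - f x - h *m M| <= eps * `|h|.
  move=> eps eps0.
  pose eps' := eps / (n%:R + 1).
  have n1 : 0 < n%:R + 1 :> R by rewrite ltr_wpDl.
  have eps'0 : 0 < eps' by rewrite divr_gt0.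
  have : \forall q \near x, A q /\ forall i, `|'D_(e i) f q - 'D_(e i) f x| <= eps'.
    near=> q; split.
      by near: q; apply: open_nbhs_nbhs.
    near: q; apply: filter_forall => i.
    have := cont (e i); move/(@cvgrPdist_le _ _ _ (nbhs x) _) => /(_ eps' eps'0).
    by apply: filterS => q; rewrite distrC.
  move=> /nbhs_ballP [d d0 Hd].
  apply/nbhs_ballP; exists d => // h; rewrite -ball_normE /= sub0r normrN => hd.
  pose P (i : nat) : 'rV[R]_n := \row_l (if (l < i)%N then h 0 l else 0).
  have Pn : P n = h by apply/rowP => l; rewrite mxE ltn_ord.
  have P0 : P 0%N = 0 by apply/rowP => l; rewrite !mxE.
  have PS (i : 'I_n) : P i.+1 = P i + h 0 i *: e i.
    apply/rowP => l; rewrite !mxE eqxx /=.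
    have [li|il|/val_inj ->] := ltngtP l i.
    - have -> : (l == i) = false by apply/eqP => E; move: li; rewrite E ltnn.
      by rewrite ltnS ltnW // mulr0 addr0.
    - have -> : (l == i) = false by apply/eqP => E; move: il; rewrite E ltnn.
      by rewrite ltnS leqNgt il /= mulr0 addr0.
    - by rewrite ltnS leqnn eqxx mulr1 add0r.
  have Pnorm (i : 'I_n) s : `|s| <= `|h 0 i| -> `|P i + s *: e i| <= `|h|.
    move=> si; apply: mxnorm_le => // i0 l; rewrite (ord1 i0) !mxE eqxx /=.
    case: ifP => li.
      have -> : (l == i) = false by apply/eqP => E; move: li; rewrite E ltnn.
      by rewrite mulr0 addr0 mxnorm_ge.
    rewrite add0r; case: eqP => [_|_]; last by rewrite mulr0 normr0.
    by rewrite mulr1 (le_trans si) // mxnorm_ge.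
  have term (i : 'I_n) (j : 'I_k) :
      `|f (x + P i.+1) 0 j - f (x + P i) 0 j - h 0 i * M i j| <= eps' * `|h|.
    rewrite PS addrA.
    have : `|(fun r => f (x + P i + r *: e i) 0 j) (h 0 i)
            - (fun r => f (x + P i + r *: e i) 0 j) 0 - h 0 i * M i j|
           <= eps' * `|h 0 i|.
      apply: (@mvt_bound _ (fun r => f (x + P i + r *: e i) 0 j)) => s si.
      have Aq : ball x d (x + P i + s *: e i).
        rewrite -ball_normE /= -addrA opprD addrA subrr sub0r normrN.
        exact: (le_lt_trans (Pnorm i s si)).
      have [Aq' Dq] := Hd _ Aq.
      have dg := @dir_line_derivable _ _ _ f (x + P i) (e i) s (der (e i) _ Aq').
      have [dphi Dphi] := entry_derivable _ _ j dg.
      split; first exact dphi.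
      rewrite Dphi dir_line_derive mxE.
      have H := mxnorm_ge ('D_(e i) f (x + P i + s *: e i) - 'D_(e i) f x) 0 j.
      rewrite !mxE in H; exact: le_trans H (Dq i).
    rewrite /= scale0r addr0 => H; apply: (le_trans H).
    by apply: ler_wpM2l; [exact: ltW | exact: mxnorm_ge].
  apply: mxnorm_le => [|i0 j]; first by rewrite mulr_ge0 // ltW.
  rewrite (ord1 i0).
  have -> : (f (h + x) - f x - h *m M) 0 j =
      \sum_(i < n) (f (x + P i.+1) 0 j - f (x + P i) 0 j - h 0 i * M i j).
    rewrite sumrB -(big_mkord xpredT (fun i => f (x + P i.+1) 0 j - f (x + P i) 0 j)).
    rewrite telescope_sumr // Pn P0 addr0 [h + x]addrC.
    by rewrite !mxE.
  rewrite (le_trans (ler_norm_sum _ _ _)) //.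
  rewrite (le_trans (ler_sum _ (fun i _ => term i j))) // sumr_const card_ord.
  have nle : n%:R * eps' <= eps.
    by rewrite /eps' mulrA ler_pdivrMr // mulrC ler_pM2l // lerDl.
  by rewrite -mulr_natl mulrA ler_wpM2r.
pose L : {linear 'rV[R]_n -> 'rV[R]_k} := mulmxr M.
have dfx : f \o shift x = cst (f x) + (L : 'rV[R]_n -> 'rV[R]_k) +o_ (0 : 'rV[R]_n) id.
  apply/eqaddoP => eps eps0; have := key eps eps0; apply: filterS => h /=.
  by rewrite opprD addrA.
have dfeq : 'd f x = L :> ('rV_n -> 'rV_k).
  by apply: diff_unique => //; exact: mulmx_cont.
apply/diff_locallyP; rewrite dfeq; split => //. exact: mulmx_cont.
Unshelve. all: by end_near. Qed.
End S3.

Theorem corollary3p9 (R : realType) (m : nat) (E : set 'rV[R]_m)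
  (B : 'rV[R]_m -> 'rV[R]_m) :
  open E -> smooth_on E B -> smooth_nondeg_line_fibration E B ->
  forall y, E y ->
    ~ (exists (lam : R) (v : 'rV[R]_m), v != 0 /\ 'd B y v = lam *: v).
Proof.
move=> oE sB [oT [disj [V [sV [unitV [Vline nondeg]]]]]] y Ey [lam [v [v0 Hv]]].
set T := line_union E B in oT sV unitV nondeg.
have Bd : differentiable B y.
  have [_ HB] := sB 1%N.
  exact: (@partials_diff R m m E B y oE Ey (fun w z Ez => proj1 (HB w) z Ez) (fun w => proj2 (HB w) y Ey)).
have Vd p : T p -> differentiable V p.
  move=> Tp; have [_ HV] := sV 1%N.
  exact: (@partials_diff R _ _ T V p oT Tp (fun w z Ez => proj1 (HV w) z Ez) (fun w => proj2 (HV w) p Tp)).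
have dBl : derivable (fun r : R => B (y + r *: v)) 0 1 /\
    'D_1 (fun r : R => B (y + r *: v)) 0 = lam *: v.
  have e0 : y + 0 *: v = y by rewrite scale0r addr0.
  split.
    apply: dir_line_derivable; rewrite e0; exact: diff_derivable.
  by rewrite dir_line_derive e0 deriveE.
have dl : derivable (fun r : R => y + r *: v) 0 1 /\
    'D_1 (fun r : R => y + r *: v) 0 = v.
  split; first by apply: (@dir_line_derivable _ _ _ id); exact: derivable_id.
  by rewrite (@dir_line_derive _ _ _ id) derive_id.
have Enear : \forall r \near (0 : R), E (y + r *: v).
  have lc : {for 0, continuous (fun r : R => y + r *: v)}.
    exact/differentiable_continuous/derivable1_diffP/(proj1 dl).
  have : nbhs (y + 0 *: v) E by rewrite scale0r addr0; exact: open_nbhs_nbhs.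
  by move/lc.
pose h := fun r : R => line_dir B (y + r *: v).
have chain t : derivable h 0 1 /\
    'D_1 h 0 = 'D_(row_mx 0 (v + t *: (lam *: v))) V (line_pt B y t).
  pose g := (fun r : R => y + r *: v) + t *: (fun r : R => B (y + r *: v)).
  have dg : derivable g 0 1 /\ 'D_1 g 0 = v + t *: (lam *: v).
    split.
      by apply: derivableD; [exact: (proj1 dl) | apply: derivableZ; exact: (proj1 dBl)].
    rewrite deriveD; [|exact: (proj1 dl) | apply: derivableZ; exact: (proj1 dBl)].
    by rewrite deriveZ ?(proj2 dl) ?(proj2 dBl) //; exact: (proj1 dBl).
  pose R0 : 'M[R]_(m, 1 + m) := row_mx 0 1%:M.
  pose L0 : {linear 'rV[R]_m -> 'rV[R]_(1 + m)} := mulmxr R0.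
  pose c := fun r : R => row_mx (t%:M : 'rV[R]_1) 0 + L0 (g r).
  have cE r : c r = line_pt B (y + r *: v) t.
    rewrite /c /g !fctE /L0 /= /line_pt /R0 mul_mx_row mulmx0 mulmx1 add_row_mx addr0 add0r.
    by [].
  have L0c : continuous L0 by exact: mulmx_cont.
  have qeq : (fun h0 : R => h0^-1 *: ((c \o shift 0) (h0 *: 1) - c 0)) =
      L0 \o (fun h0 : R => h0^-1 *: ((g \o shift 0) (h0 *: 1) - g 0)).
    apply/funext => h0; rewrite /c /=.
    by rewrite opprD addrACA subrr add0r -mulmxBl scalemxAl.
  have cl : (fun h0 : R => h0^-1 *: ((c \o shift 0) (h0 *: 1) - c 0)) @ 0^'
      --> L0 ('D_1 g 0).
    by rewrite qeq; apply: continuous_cvg; [exact: L0c | exact: (proj1 dg)].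
  have cdv : derivable c 0 1 by apply/cvg_ex; exists (L0 ('D_1 g 0)).
  have Dc : 'D_1 c 0 = row_mx 0 (v + t *: (lam *: v)).
    rewrite [LHS]/derive (cvg_lim _ cl).
    transitivity (L0 (v + t *: (lam *: v))); first by congr (L0 _); exact: (proj2 dg).
    by rewrite /L0 /= /R0 mul_mx_row mulmx0 mulmx1.
    exact: norm_hausdorff.
  have cd : differentiable c 0 by apply/derivable1_diffP.
  have c0 : c 0 = line_pt B y t by rewrite cE scale0r addr0.
  have Tc0 : T (c 0) by rewrite c0; exists y, t.
  have Vcd : differentiable (V \o c) 0 by apply: differentiable_comp => //; exact: Vd.
  have hnear : \forall r \near (0 : R), (V \o c) r = h r.
    by near=> r; rewrite /= cE Vline //; near: r.
  have DVc : 'D_1 (V \o c) 0 = 'D_(row_mx 0 (v + t *: (lam *: v))) V (line_pt B y t).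
    rewrite deriveE // (diff_comp cd (Vd _ Tc0)) /= -(deriveE _ cd) Dc -c0.
    by rewrite deriveE //; exact: Vd.
  split.
    apply: (near_eq_derivable hnear); exact: diff_derivable.
  by rewrite -(near_eq_derive _ hnear) DVc.
pose N r := (Num.sqrt (1 + eucl2 (B (y + r *: v))))^-1.
pose F (j : 'I_m) r := B (y + r *: v) 0 j.
have e2 w : 0 <= eucl2 w :> R by apply: sumr_ge0 => i _; exact: sqr_ge0.
have Npos r : 0 < N r.
  by rewrite /N invr_gt0 sqrtr_gt0 ltr_wpDr // e2.
have hl r : h r 0 (lshift m 0) = N r.
  by rewrite /h /line_dir mxE row_mxEl mxE eqxx mulr1.
have hr r j : h r 0 (rshift 1 j) = N r * F j r.
  by rewrite /h /line_dir mxE row_mxEr.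
have dF j : derivable (F j) 0 1 /\ 'D_1 (F j) 0 = lam * v 0 j.
  have [d1 D1] := entry_derivable _ _ j (proj1 dBl).
  by split => //; rewrite /F D1 (proj2 dBl) mxE.
have [dh _] := chain 0.
have [dN DN] : derivable N 0 1 /\ 'D_1 N 0 = ('D_1 h 0) 0 (lshift m 0).
  have [d1 D1] := entry_derivable _ _ (lshift m 0) dh.
  have e : (fun r => h r 0 (lshift m 0)) = N by apply/funext => r; rewrite hl.
  by rewrite e in d1 D1.
have Dr j : ('D_1 h 0) 0 (rshift 1 j) =
    N 0 * (lam * v 0 j) + F j 0 * ('D_1 h 0) 0 (lshift m 0).
  have [d1 D1] := entry_derivable _ _ (rshift 1 j) dh.
  have e : (fun r => h r 0 (rshift 1 j)) = N * F j by apply/funext => r; rewrite hr.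
  rewrite -D1 e deriveM //; last exact: (proj1 (dF j)).
  by rewrite (proj2 (dF j)) -DN.
have N0 : N 0 != 0 by rewrite gt_eqF.
have [lam0|lamn0] := eqVneq lam 0.
-
  subst lam.
  pose G := cst 1 + \sum_(j < m) (F j) ^+ 2.
  have GE r : G r = 1 + eucl2 (B (y + r *: v)).
    by rewrite /G /eucl2 !fctE fct_sumE; congr (_ + _); apply: eq_bigr => j _.
  have Q0 r : 0 < 1 + eucl2 (B (y + r *: v)) by rewrite ltr_wpDr // e2.
  have NG : N ^+ 2 * G = cst 1.
    apply/funext => r; rewrite mulrfctE exprfctE /= GE /N exprVn sqr_sqrtr ?mulVf //.
      by rewrite gt_eqF.
    exact: ltW.
  have dG : derivable G 0 1.
    apply: derivableD; first exact: derivable_cst.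
    by apply: derivable_sum => j; apply: derivableX; exact: (proj1 (dF j)).
  have DG : 'D_1 G 0 = 0.
    rewrite deriveD; first last.
    - by apply: derivable_sum => j; apply: derivableX; exact: (proj1 (dF j)).
    - exact: derivable_cst.
    rewrite derive_cst add0r derive_sum; last first.
      by move=> j; apply: derivableX; exact: (proj1 (dF j)).
    apply: big1 => j _; rewrite deriveX; last exact: (proj1 (dF j)).
    rewrite (_ : 'D_1 (F j) 0 = 0 * v 0 j); last exact: (proj2 (dF j)).
    by rewrite mul0r scaler0.
  have : 'D_1 (N ^+ 2 * G) 0 = 0 by rewrite NG derive_cst.
  rewrite deriveM; [|exact: derivableX|exact dG].
  rewrite DG scaler0 add0r deriveX // => /eqP H.
  have a0 : 'D_1 N 0 = 0.
    move: H; rewrite !scaler_eq0 GE (gt_eqF (Q0 0)) pnatr_eq0 /= expr1 (negbTE N0) /=.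
    by move/eqP.
  have W0 : 'D_1 h 0 = 0.
    apply/rowP => j; rewrite mxE; case: (splitP j) => [i ji|i ji].
      have -> : j = lshift m i by apply: val_inj.
      by rewrite (ord1 i) -DN a0.
    have -> : j = rshift 1 i by apply: val_inj.
    by rewrite Dr -DN a0 mul0r mulr0 mulr0 addr0.
  have [_ D0] := chain 0.
  rewrite W0 !scale0r addr0 in D0.
  have Tp : T (line_pt B y 0) by exists y, 0.
  have [c0 Xc] := nondeg _ _ Tp (esym D0).
  have Vp : V (line_pt B y 0) = h 0 by rewrite Vline // /h scale0r addr0.
  rewrite Vp in Xc.
  have := congr1 (fun M : 'rV[R]_(1 + m) => M 0 (lshift m 0)) Xc.
  rewrite /= row_mxEl [X in X = _]mxE [X in _ = X]mxE hl => /esym/eqP.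
  rewrite mulf_eq0 (negbTE N0) orbF => /eqP c00.
  rewrite c00 scale0r -row_mx0 in Xc.
  move/eqP: v0; apply; by have [_ ->] := eq_row_mx Xc.
- have [_ D0] := chain (- lam^-1).
  have X0 : v + - lam^-1 *: (lam *: v) = 0.
    by rewrite scalerA mulNr mulVf // scaleN1r subrr.
  rewrite X0 row_mx0 derive0 in D0.
  have a0 : ('D_1 h 0) 0 (lshift m 0) = 0 by rewrite D0 mxE.
  move/eqP: v0; apply; apply/rowP => j; rewrite mxE.
  have := Dr j; rewrite D0 !mxE mulr0 addr0 => /esym/eqP.
  by rewrite !mulf_eq0 (negbTE N0) (negbTE lamn0) /= => /eqP.
Unshelve. all: by end_near. Qed.
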